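(* Let $\delta\in(0,1)$, $\epsilon>0$, $\gamma^*\ge0$, and consider the progressive sampling algorithm PS-REG+ (described in the context) run on a simulation-based game with these parameters. If PS-REG+ returns an empirical utility function $\hat u$, then with probability at least $1-\delta$ it holds that $E(u)\subseteq E_{2\epsilon}(\hat u)$ and $E_\gamma(\hat u)\subseteq E_{2\epsilon+\gamma}(u)$ for all $0\le\gamma\le\gamma^*$, where $u$ is the true utility function.
   Context: Games. A normal-form game has a finite set of players $P$, finite pure strategy sets $S_p$, pure profile space $\mathbf{S}=\prod_pS_p$ and utility $u:\mathbf{S}\to\mathbb{R}^{|P|}$. For a profile $s$ and player $p$, $A_{p,s}$ is the set of pure profiles obtained from $s$ by replacing $p$'s strategy by any $t\in S_p$. $\mathrm{Reg}_p(s;u)=\sup_{s'\in A_{p,s}}u_p(s')-u_p(s)$, $\mathrm{Reg}(s;u)=\max_p\mathrm{Reg}_p(s;u)$; $E_\gamma(u)=\{s\in\mathbf{S}:\mathrm{Reg}(s;u)\le\gamma\}$, $E(u)=E_0(u)$. Simulation-based game: a simulator which, queried at a pure profile $s$, returns an independent random utility vector with coordinates in $[a_s,b_s]$; $c=\sup_s(b_s-a_s)$; the true utility $u(s)$ is the expected simulator output. Index set $\mathcal{I}=P\times\mathbf{S}$. Progressive sampling algorithm: schedule $m_1,\dots,m_T$, $M_t=m_1+\dots+m_t$. All indices start active. At iteration $t$, for each active $(p,s)$, draw $m_t$ fresh samples of $p$'s utility at $s$, let $\hat u^{(t)}_p(s)$ be the mean of all $M_t$ samples, and compute a (non-uniform,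 index-specific) deviation bound $\hat\epsilon^{(t)}_p(s)$ with $|u_p(s)-\hat u^{(t)}_p(s)|\le\hat\epsilon^{(t)}_p(s)$ with probability at least $1-\delta/(|\mathcal{I}|T)$. Pruned indices are no longer sampled and retain their last values of $\hat u^{(t)}$ and $\hat\epsilon^{(t)}$. After pruning, if no index is active the algorithm returns $\hat u=\hat u^{(t)}$; if the schedule is exhausted with active indices it returns nothing. Define the regret lower bound $\mathrm{Reg}^\downarrow_p(s;\hat u^{(t)})=\sup_{s'\in A_{p,s}}\big(\hat u^{(t)}_p(s')-\hat\epsilon^{(t)}_p(s')\big)-\big(\hat u^{(t)}_p(s)+\hat\epsilon^{(t)}_p(s)\big)$. PS-REG+ prunes an active index $(p,s)$ at iteration $t$ if $\hat\epsilon^{(t)}_p(s)\le\epsilon$ (well-estimated pruning) or if $\mathrm{Reg}^\downarrow_p(s;\hat u^{(t)})>\max\{0,\ \gamma^*+\epsilon-\hat\epsilon^{(t)}_p(s)\}$ (regret pruning). *)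

(* Defs.v *)
From HB Require Import structures.
From mathcomp Require Import all_boot all_order all_algebra.
From mathcomp Require Import all_classical all_reals all_analysis.
Set Implicit Arguments. Unset Strict Implicit. Unset Printing Implicit Defensive.
Import Order.TTheory GRing.Theory Num.Theory.
Local Open Scope ring_scope.

Section Game.
Variables (R : realType) (Pl : finType) (St : Pl -> finType).

Definition prof := {dffun forall p : Pl, St p}.

Definition dev (p : Pl) (s s' : prof) : bool :=
  [forall q, (q != p) ==> (s' q == s q)].

Definition util := prof -> Pl -> R.

(* Reg_p(s;u) = sup_{s' in A_{p,s}} u_p(s') - u_p(s).  Since s \in A_{p,s}
   this sup is >= 0, so seeding the finite max with 0 is exact. *)
Definition Regp (u : util) (p : Pl) (s : prof) : R :=
  \big[Num.max/0]_(s' | dev p s s') (u s' p - u s p).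

Definition Reg (u : util) (s : prof) : R := \big[Num.max/0]_(p : Pl) Regp u p s.

Definition Egam (gamma : R) (u : util) : {set prof} := [set s | Reg u s <= gamma].

(* Reg^down_p(s; uh) with deviation bounds eh; the max is seeded with the
   s' = s term, which belongs to the range, so it is exact. *)
Definition Regdown (uh eh : util) (p : Pl) (s : prof) : R :=
  (\big[Num.max/(uh s p - eh s p)]_(s' | dev p s s') (uh s' p - eh s' p))
  - (uh s p + eh s p).

Definition prunable (eps gstar : R) (uh eh : util) (i : Pl * prof) : bool :=
  (eh i.2 i.1 <= eps) ||
  (Num.max 0 (gstar + eps - eh i.2 i.1) < Regdown uh eh i.1 i.2).

(* U t, Eb t : empirical mean and deviation
   bound at iteration t (for every index; only used while the index is active).
   State: active index set, current tables (pruned indices keep last values). *)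
Fixpoint psreg_loop (eps gstar : R) (U Eb : nat -> util) (t fuel : nat)
    (A : {set Pl * prof}) (uh eh : util) : option util :=
  match fuel with
  | 0 => None
  | fuel'.+1 =>
    let uh' := fun s p => if (p, s) \in A then U t s p else uh s p in
    let eh' := fun s p => if (p, s) \in A then Eb t s p else eh s p in
    let A' := [set i in A | ~~ prunable eps gstar uh' eh' i] in
    if A' == finset.set0 then Some uh'
    else psreg_loop eps gstar U Eb t.+1 fuel' A' uh' eh'
  end.

Definition psreg (eps gstar : R) (U Eb : nat -> util) (T : nat) : option util :=
  psreg_loop eps gstar U Eb 1 T [set: Pl * prof] (fun _ _ => 0) (fun _ _ => 0).

Definition Msched (m : nat -> nat) (t : nat) : nat := \sum_(1 <= i < t.+1) m i.

(* empirical mean of the first M_t samples; X k w s p = k-th simulator sample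
   of p's utility at s *)
Definition Uhat (m : nat -> nat) {T : Type} (X : nat -> T -> util) (t : nat)
    (w : T) : util :=
  fun s p => (\sum_(k < Msched m t) X k w s p) / (Msched m t)%:R.

End Game.

(* Main.v *)
Set Warnings "-notation-overridden -ambiguous-paths -notation-incompatible-prefix".
Require Import Defs.

From HB Require Import structures.
From mathcomp Require Import all_boot all_order all_algebra.
From mathcomp Require Import all_classical all_reals all_analysis.
From mathcomp Require Import lra zify.
Import Order.TTheory GRing.Theory Num.Theory.
Set Implicit Arguments. Unset Strict Implicit.
Local Open Scope ring_scope.

Section Det.
Variables (R : realType) (Pl : finType) (St : Pl -> finType).
Local Notation prof := (prof St).

Lemma bigmax_ub (I : finType) (P : pred I) (F : I -> R) x0 i :
  P i -> F i <= \big[Num.max/x0]_(j | P j) F j.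
Proof. by move=> Pi; rewrite (bigD1 i) //= le_max lexx. Qed.

Lemma bigmax_lub (I : finType) (P : pred I) (F : I -> R) x0 g :
  x0 <= g -> (forall i, P i -> F i <= g) -> \big[Num.max/x0]_(j | P j) F j <= g.
Proof.
move=> h0 hF; elim/big_rec: _ => // i x Pi hx.
by rewrite ge_max hF.
Qed.

Lemma bigmax_att (I : finType) (P : pred I) (F : I -> R) z :
  P z -> exists z', P z' /\ \big[Num.max/F z]_(j | P j) F j <= F z'.
Proof.
move=> Pz; elim/big_rec: _; first by exists z.
move=> i x Pi [z' [Pz' hx]].
case: (leP (F i) x) => hi.
  by exists z'; split => //; rewrite ge_max hx (le_trans hi hx).
by exists i; split => //; rewrite ge_max lexx (ltW hi).
Qed.

Lemma dev_refl p (s : prof) : dev p s s.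
Proof. by apply/forallP => q; apply/implyP. Qed.

Lemma dev_trans p (s s' s'' : prof) : dev p s s' -> dev p s' s'' -> dev p s s''.
Proof.
move=> /forallP h1 /forallP h2; apply/forallP => q; apply/implyP => hq.
move: (h1 q) (h2 q); rewrite hq /= => /eqP e1 /eqP e2.
by rewrite e2 e1.
Qed.

Lemma Egam_P g (v : util R St) s : 0 <= g ->
  (s \in Egam g v) <-> (forall p s', dev p s s' -> v s' p - v s p <= g).
Proof.
move=> g0; rewrite inE /Reg; split.
  move=> h p s' hs'; apply: le_trans h.
  apply: (le_trans _ (@bigmax_ub Pl (fun _ => true) (fun p => Regp v p s) 0 p isT)).
  by rewrite /Regp; apply: bigmax_ub.
move=> h; apply: bigmax_lub => // p _; apply: bigmax_lub => // s' hs'.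
exact: h.
Qed.

Variables (u : util R St) (eps gstar : R).

Definition Vd (uh eh : util R St) (i : Pl * prof) :=
  `|u i.2 i.1 - uh i.2 i.1| <= eh i.2 i.1.

Definition Pd (uh eh : util R St) (i : Pl * prof) :=
  eh i.2 i.1 <= eps \/ exists s'', dev i.1 i.2 s'' /\
    uh i.2 i.1 + eh i.2 i.1 + Num.max 0 (gstar + eps - eh i.2 i.1) < u s'' i.1.

Lemma prune_P uh eh i : (forall j, Vd uh eh j) ->
  prunable eps gstar uh eh i -> Pd uh eh i.
Proof.
move=> hV /orP [h|h]; [by left|right].
case: i h => p s /= h.
have [z [hz hle]] := bigmax_att (fun s' => uh s' p - eh s' p) (dev_refl p s).
exists z; split => //.
move: h; rewrite /Regdown => h.
have := hV (p, z); rewrite /Vd /= ler_norml => /andP [h1 h2].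
set M := \big[_/_]_(_ | _) _ in h hle.
lra.
Qed.

Lemma final_claims uh eh : (forall j, Vd uh eh j /\ Pd uh eh j) -> 0 < eps -> 0 <= gstar ->
      (forall s, s \in Egam 0 u -> s \in Egam (2 * eps) uh) /\
      (forall gamma, 0 <= gamma <= gstar ->
         forall s, s \in Egam gamma uh -> s \in Egam (2 * eps + gamma) u).
Proof.
move=> hVP e0 g0.
have V j := (hVP j).1; have P j := (hVP j).2.
have Vx p s : u s p - eh s p <= uh s p <= u s p + eh s p.
  have := V (p, s); rewrite /Vd /= ler_norml => /andP [h1 h2].
  apply/andP; split; lra.
have mx (x : R) : 0 <= Num.max 0 x /\ x <= Num.max 0 x by split; rewrite le_max lexx ?orbT.
split.
  move=> s /Egam_P - /(_ (lexx 0)) hs; apply/Egam_P; first lra.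
  move=> p s' hs'.
  have hes : eh s p <= eps.
    case: (P (p, s)) => //= [[s'' [hd hl]]].
    have := hs p s'' hd; have := Vx p s; have := mx (gstar + eps - eh s p).
    move=> [? ?] /andP [? ?] ?; lra.
  have hs'u : uh s' p <= u s p + eps.
    case: (P (p, s')) => /= [h | [s'' [hd hl]]].
      have := hs p s' hs'; have := Vx p s'; move=> /andP [? ?] ?; lra.
    have := hs p s'' (dev_trans hs' hd); have := Vx p s'.
    have := mx (gstar + eps - eh s' p); move=> [? ?] /andP [? ?] ?; lra.
  have := Vx p s; move=> /andP [? ?]; lra.
move=> gamma /andP [ga gb] s /Egam_P - /(_ ga) hs; apply/Egam_P; first lra.
move=> p s' hs'.
have [z [hz hle]] := bigmax_att (fun s' => u s' p) (dev_refl p s).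
set M := \big[_/_]_(_ | _) _ in hle.
have ub x : dev p s x -> u x p <= u z p.
  by move=> hx; apply: le_trans hle; apply: bigmax_ub.
have hez : eh z p <= eps.
  case: (P (p, z)) => //= [[s'' [hd hl]]].
  have := ub s'' (dev_trans hz hd); have := Vx p z; have := mx (gstar + eps - eh z p).
  move=> [? ?] /andP [? ?] ?; lra.
have hes : eh s p <= eps.
  case: (P (p, s)) => //= [[s'' [hd hl]]].
  have := ub s'' hd; have := Vx p z; have := hs p z hz.
  have := mx (gstar + eps - eh s p).
  move=> [? ?] ? /andP [? ?] ?; lra.
have := ub s' hs'; have := Vx p z; have := Vx p s; have := hs p z hz.
move=> ? /andP [? ?] /andP [? ?] ?; lra.
Qed.


Variables (U Eb : nat -> util R St) (T : nat).
Hypothesis good : forall t, (1 <= t <= T)%N -> forall s p, `|u s p - U t s p| <= Eb t s p.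

Lemma loop_inv fuel t (A : {set Pl * prof}) uh eh uh0 :
  (1 <= t)%N -> (t + fuel <= T.+1)%N ->
  (forall i, i \notin A -> Vd uh eh i /\ Pd uh eh i) ->
  psreg_loop eps gstar U Eb t fuel A uh eh = Some uh0 ->
  exists eh0, forall i, Vd uh0 eh0 i /\ Pd uh0 eh0 i.
Proof.
elim: fuel t A uh eh => [//|fuel IH] t A uh eh t1 tT hinv /=.
pose uh' := fun s p => if (p, s) \in A then U t s p else uh s p.
pose eh' := fun s p => if (p, s) \in A then Eb t s p else eh s p.
pose A' := [set i in A | ~~ prunable eps gstar uh' eh' i].
change (psreg_loop eps gstar U Eb t.+1 fuel A' uh' eh') with
  (psreg_loop eps gstar U Eb t.+1 fuel A' uh' eh').
rewrite -/uh' -/eh' -/A'.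
have hV : forall j, Vd uh' eh' j.
  case=> p s; rewrite /Vd /uh' /eh' /=; case: ifP => hA.
    by apply: good; rewrite t1 /=; lia.
  by have := hinv (p, s); rewrite hA => /(_ isT) [].
have hinv' : forall i, i \notin A' -> Vd uh' eh' i /\ Pd uh' eh' i.
  case=> p s hi; split; first exact: hV.
  case hA: ((p, s) \in A).
    apply: prune_P => //; move: hi; rewrite inE hA /=; by case: prunable.
  have := hinv (p, s); rewrite hA => /(_ isT) [_].
  by rewrite /Pd /uh' /eh' /= hA.
case: ifP => [/eqP hA0 [<-]|_ h].
  by exists eh' => i; apply: hinv'; rewrite hA0 inE.
apply: (IH t.+1 A' uh' eh') => //; lia.
Qed.

End Det.
Section Prob.
Local Open Scope classical_set_scope.
Variables (R : realType) (d : measure_display) (Omega : measurableType d)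
  (Pr : probability Omega R).

Lemma PrE (A : set Omega) : measurable A -> Pr A = (fine (Pr A))%:E.
Proof. by move=> mA; rewrite fineK // fin_num_measure. Qed.

Lemma PrI (A B : set Omega) a b : measurable A -> measurable B ->
  (a%:E <= Pr A)%E -> (b%:E <= Pr B)%E -> ((a + b - 1)%:E <= Pr (A `&` B))%E.
Proof.
move=> mA mB hA hB.
have mAB : measurable (A `&` B) by exact: measurableI.
have h : (Pr (~` A `|` ~` B) <= Pr (~` A) + Pr (~` B))%E.
  apply: measureU2; exact: measurableC.
rewrite -setCI !probability_setC // in h.
move: h hA hB; rewrite (PrE mA) (PrE mB) (PrE mAB) -[1%E]/(1%:E) -!EFinB -!EFinD !lee_fin.
lra.
Qed.

Lemma Pr_list (I : eqType) (F : I -> set Omega) c :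
  (forall i, measurable (F i) /\ ((1 - c)%:E <= Pr (F i))%E) ->
  forall l : seq I, measurable [set w | forall i, i \in l -> F i w] /\
    ((1 - (size l)%:R * c)%:E <= Pr [set w | forall i, i \in l -> F i w])%E.
Proof.
move=> hF; elim=> [|x l [ml hl]].
  have -> : [set w | forall i, i \in [::] -> F i w] = setT.
    by apply/seteqP; split => w //= _ i; rewrite in_nil.
  by rewrite probability_setT /= mul0r subr0; split.
have -> : [set w | forall i, i \in x :: l -> F i w] =
   F x `&` [set w | forall i, i \in l -> F i w].
  apply/seteqP; split => w /=.
    by move=> h; split; [apply: h; rewrite inE eqxx | move=> i il; apply: h; rewrite inE il orbT].
  move=> [h1 h2] i; rewrite inE => /orP [/eqP -> //|]; exact: h2.
have [mx hx] := hF x.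
split; first exact: measurableI.
apply: le_trans (PrI mx ml hx hl).
rewrite lee_fin /= -addn1 natrD; lra.
Qed.

End Prob.

Theorem theorem7 (R : realType) (d : measure_display) (Omega : measurableType d)
  (Pr : probability Omega R) (Pl : finType) (St : Pl -> finType)
  (u : util R St) (X : nat -> Omega -> util R St) (a b : prof St -> R)
  (m : nat -> nat) (T : nat) (Eb : nat -> Omega -> util R St)
  (delta eps gstar : R) :
  0 < delta < 1 -> 0 < eps -> 0 <= gstar ->
  (forall t, (1 <= t <= T)%N -> (0 < m t)%N) ->
  (* simulator outputs lie in [a_s, b_s] *)
  (forall k w s p, a s <= X k w s p <= b s) ->
  (* true utility = expected simulator output *)
  (forall k s p, Pr.-integrable setT (fun w => (X k w s p)%:E) /\
     (\int[Pr]_w (X k w s p)%:E = (u s p)%:E)%E) ->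
  (* validity of the index-specific deviation bounds at each iteration *)
  (forall t, (1 <= t <= T)%N -> forall s p,
     let ev := [set w | `|u s p - Uhat m X t w s p| <= Eb t w s p]%classic in
     measurable ev /\
     (Pr ev >= (1 - delta / (#|Pl| * #|{: prof St}| * T)%:R)%:E)%E) ->
  exists G : set Omega, measurable G /\ (Pr G >= (1 - delta)%:E)%E /\
    forall w, G w -> forall uh,
      psreg eps gstar (fun t => Uhat m X t w) (fun t => Eb t w) T = Some uh ->
      (forall s, s \in Egam 0 u -> s \in Egam (2 * eps) uh) /\
      (forall gamma, 0 <= gamma <= gstar ->
         forall s, s \in Egam gamma uh -> s \in Egam (2 * eps + gamma) u).
Proof.
move=> /andP [d0 d1] e0 g0 _ _ _ hev.
pose I : finType := ((Pl * prof St) * 'I_T)%type.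
pose F (i : I) := [set w | `|u i.1.2 i.1.1 - Uhat m X (i.2.+1) w i.1.2 i.1.1|
   <= Eb (i.2.+1) w i.1.2 i.1.1]%classic.
pose n := (#|Pl| * #|{: prof St}| * T)%N.
pose c := delta / n%:R.
have hF : forall i, measurable (F i) /\ ((1 - c)%:E <= Pr (F i))%E.
  case=> [[p s] t] /=.
  have ht : (1 <= t.+1 <= T)%N by rewrite /= ltn_ord.
  exact: (hev _ ht s p).
have [mG hG] := Pr_list hF (enum I).
exists [set w | forall i, i \in enum I -> F i w]%classic; split => //; split.
  apply: le_trans hG; rewrite lee_fin.
  have -> : size (enum I) = n by rewrite -cardE /n !card_prod card_ord.
  suff : n%:R * c <= delta by lra.
  case: (posnP n) => [->|n0]; first by rewrite mul0r; lra.
  rewrite /c mulrC -mulrA mulVf ?mulr1 // pnatr_eq0 -lt0n //.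
move=> w hw uh hps.
have good : forall t, (1 <= t <= T)%N -> forall s p,
    `|u s p - Uhat m X t w s p| <= Eb t w s p.
  move=> t /andP [t1 tT] s p.
  have tT' : (t.-1 < T)%N by lia.
  have := hw ((p, s), Ordinal tT') (mem_enum _ _); rewrite /F /=.
  by rewrite prednK.
have := loop_inv good (fuel := T) (t := 1) (A := [set: Pl * prof St])
  (uh := fun _ _ => 0) (eh := fun _ _ => 0) (isT : (1 <= 1)%N) (leqnn _) _ hps.
case; first by move=> i; rewrite inE.
move=> eh0 heh.
exact: final_claims heh e0 g0.
Qed.
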